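(* Let $G$ be a finite simple graph on $n$ vertices with at least one edge, let $\lambda_1$ and $\lambda_n$ be the largest and smallest eigenvalues of its (0/1) adjacency matrix, let $P_{\lambda_1}$ be the orthogonal projection onto the $\lambda_1$-eigenspace, and put $p=\langle\boldsymbol 1,P_{\lambda_1}\boldsymbol 1\rangle$. If $\frac{-\lambda_n(n-p)}{\lambda_1 p}\le 1$, then $$\vartheta(G)\le\frac{-n\lambda_n}{\lambda_1-\lambda_n}\cdot\frac{p}{n}\left(1+\sqrt{\frac{\lambda_1(n-p)}{-\lambda_n\,p}}\right)^2.$$
   Context: $\boldsymbol 1$ is the all-ones vector and $\langle\cdot,\cdot\rangle$ the standard inner product. $\vartheta(G)$ is the Lovász theta function, $\vartheta(G)=\inf_B\lambda_{\max}(B)$ over real symmetric $B$ with $B_{ij}=1$ whenever $i=j$ or $i,j$ are non-adjacent. *)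

(* Defs.v *)
From HB Require Import structures.
From mathcomp Require Import all_boot all_order all_algebra.
From mathcomp Require Import all_classical all_reals.
Set Implicit Arguments. Unset Strict Implicit. Unset Printing Implicit Defensive.
Import Order.TTheory GRing.Theory Num.Theory.
Local Open Scope ring_scope.
Local Open Scope classical_set_scope.

Definition simple_graph (n : nat) (e : rel 'I_n) : Prop :=
  (forall i, ~~ e i i) /\ (forall i j, e i j = e j i).

Definition has_edge (n : nat) (e : rel 'I_n) : Prop := exists i j, e i j.

Definition adjmx (R : realType) (n : nat) (e : rel 'I_n) : 'M[R]_n :=
  \matrix_(i, j) (e i j)%:R.

Definition symmetric_mx (R : realType) (n : nat) (B : 'M[R]_n) : Prop := B^T = B.

(* largest / smallest eigenvalue (mathcomp's [eigenvalue]) of a matrix; for real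
   symmetric matrices the set of eigenvalues is finite and nonempty (n > 0),
   so these are the max / min eigenvalue. *)
Definition lambda_max (R : realType) (n : nat) (B : 'M[R]_n) : R :=
  sup [set a : R | eigenvalue B a].
Definition lambda_min (R : realType) (n : nat) (B : 'M[R]_n) : R :=
  inf [set a : R | eigenvalue B a].

Definition theta_feasible (R : realType) (n : nat) (e : rel 'I_n) (B : 'M[R]_n) : Prop :=
  symmetric_mx B /\ (forall i j, (i == j) || ~~ e i j -> B i j = 1).

Definition lovasz_theta (R : realType) (n : nat) (e : rel 'I_n) : R :=
  inf [set lambda_max B | B in [set B : 'M[R]_n | theta_feasible e B]].

Definition orth_proj_onto (R : realType) (n : nat) (P V : 'M[R]_n) : Prop :=
  P^T = P /\ P *m P = P /\ (P == V)%MS.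

Definition ones (R : realType) (n : nat) : 'cV[R]_n := const_mx 1.
Definition ip (R : realType) (n : nat) (u v : 'cV[R]_n) : R := (u^T *m v) 0 0.

(* Main.v *)
Require Import Defs.
From HB Require Import structures.
From mathcomp Require Import all_boot all_order all_algebra.
From mathcomp Require Import all_classical all_reals.
From mathcomp Require Import topology normedtype derive.
From mathcomp Require Import ring lra.
Import Order.TTheory GRing.Theory Num.Theory.
Import numFieldNormedType.Exports.
Local Open Scope ring_scope.
Local Open Scope classical_set_scope.

Section Bil.
Context {R : realType} {n : nat}.
Implicit Types (u v w : 'rV[R]_n) (A : 'M[R]_n).

Definition bf A u v : R := (u *m A *m v^T) 0 0.

Lemma bfE A u v : bf A u v = \sum_i \sum_j u 0 i * A i j * v 0 j.
Proof.
rewrite /bf !mxE; under eq_bigr => j _ do rewrite !mxE big_distrl /=.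
rewrite exchange_big /=; apply: eq_bigr => i _; apply: eq_bigr => j _.
by [].
Qed.

Lemma bfDl A u v w : bf A (u + v) w = bf A u w + bf A v w.
Proof. by rewrite /bf !mulmxDl mxE. Qed.
Lemma bfDr A u v w : bf A w (u + v) = bf A w u + bf A w v.
Proof. by rewrite /bf linearD /= mulmxDr mxE. Qed.
Lemma bfZl A a u w : bf A (a *: u) w = a * bf A u w.
Proof. by rewrite /bf -!scalemxAl mxE. Qed.
Lemma bfZr A a u w : bf A w (a *: u) = a * bf A w u.
Proof. by rewrite /bf linearZ /= -scalemxAr mxE. Qed.
Lemma bfNl A u w : bf A (- u) w = - bf A u w.
Proof. by rewrite -scaleN1r bfZl mulN1r. Qed.
Lemma bfNr A u w : bf A w (- u) = - bf A w u.
Proof. by rewrite -scaleN1r bfZr mulN1r. Qed.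
Lemma bf_sym A u v : A^T = A -> bf A u v = bf A v u.
Proof.
move=> sA; rewrite /bf.
transitivity (((u *m A *m v^T)^T) 0 0); first by rewrite [in RHS]mxE.
by rewrite !trmx_mul trmxK sA mulmxA.
Qed.
Lemma bf1 u v : bf 1%:M u v = \sum_i u 0 i * v 0 i.
Proof. by rewrite /bf mulmx1 mxE; apply: eq_bigr => i _; rewrite mxE. Qed.
Lemma bf1_ge0 u : 0 <= bf 1%:M u u.
Proof. by rewrite bf1 sumr_ge0 // => i _; rewrite -expr2 sqr_ge0. Qed.
Lemma bf1_eq0 u : (bf 1%:M u u == 0) = (u == 0).
Proof.
apply/idP/idP; last by move/eqP->; rewrite /bf !mul0mx mxE.
rewrite bf1 psumr_eq0; last by move=> i _; rewrite -expr2 sqr_ge0.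
move/allP => h; apply/eqP/rowP => i; rewrite mxE.
by have := h i (mem_index_enum _); rewrite -expr2 sqrf_eq0 => /eqP.
Qed.
Lemma bf_eigen A u v a : u *m A = a *: u -> bf A u v = a * bf 1%:M u v.
Proof. by move=> h; rewrite /bf h mulmx1 -scalemxAl mxE. Qed.


Lemma quad_zero (d e : R) : (forall s, 2 * s * d + s ^+ 2 * e <= 0) -> d = 0.
Proof.
move=> h; pose k := (`|e| + 1)^-1.
have k0 : 0 < k by rewrite invr_gt0 ltr_pwDr ?normr_ge0.
have ke : k * `|e| <= 1.
  by rewrite /k mulrC ler_pdivrMr ?ltr_pwDr ?normr_ge0 // mul1r lerDl.
have hh := h (d * k).
have eN : - `|e| <= e by rewrite lerNl ler_normr lexx orbT.
have : d ^+ 2 * k * (2 + k * e) <= 0.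
  by move: hh; apply: le_trans; rewrite le_eqVlt; apply/orP; left; apply/eqP; ring.
move=> H; have : 1 <= 2 + k * e by nra.
move=> H2; have : d ^+ 2 * k <= 0 by nra.
by move=> H3; apply/eqP; rewrite -sqrf_eq0 eq_le sqr_ge0 andbT; nra.
Qed.

Lemma max_eigvec A M v : A^T = A ->
  (forall u, bf A u u <= M * bf 1%:M u u) -> bf A v v = M * bf 1%:M v v ->
  v *m A = M *: v.
Proof.
move=> sA hle heq; pose D := A - M%:M.
have bfD u w : bf D u w = bf A u w - M * bf 1%:M u w.
  by rewrite /bf mulmx1 mulmxBr mulmxBl mul_mx_scalar -scalemxAl !mxE.
have sD : D^T = D by rewrite /D linearB /= sA tr_scalar_mx.
have huv (x : 'rV[R]_n) : bf D x v = 0.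
  apply: (@quad_zero _ (bf D x x)) => s.
  have := hle (v + s *: x); rewrite -subr_le0 -bfD.
  rewrite bfDl !bfDr !bfZl !bfZr (@bf_sym D _ v sD) bfD heq subrr.
  by move=> H; apply: le_trans H; rewrite le_eqVlt; apply/orP; left; apply/eqP; ring.
have : bf 1%:M (v *m D) (v *m D) = 0.
  by rewrite -(huv (v *m D)) /bf mulmx1 trmx_mul sD mulmxA.
move/eqP; rewrite bf1_eq0 /D mulmxBr subr_eq0 => /eqP ->.
by rewrite mul_mx_scalar.
Qed.


Lemma cont_bf A : continuous (fun v : 'rV[R]_n => bf A v v).
Proof.
have -> : (fun v : 'rV[R]_n => bf A v v) =
   (fun v => \sum_i \sum_j (v 0 i * A i j * v 0 j)).
  by apply: funext => v; rewrite bfE.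
apply: continuous_big; first exact: add_continuous.
move=> i _; apply: continuous_big; first exact: add_continuous.
move=> j _ x.
apply: (@continuousM R _ (fun v : 'rV[R]_n => v 0 i * A i j) (fun v : 'rV[R]_n => v 0 j) x); last exact: coord_continuous.
apply: (@continuousZr_tmp R R^o _ (fun v : 'rV[R]_n => v 0 i) (A i j) x).
exact: coord_continuous.
Qed.

Lemma rayleigh_max A : A^T = A -> (0 < n)%N ->
  exists M, eigenvalue A M /\ forall u, bf A u u <= M * bf 1%:M u u.
Proof.
move=> sA n0.
pose S := [set v : 'rV[R]_n | bf 1%:M v v = 1].
have S0 : S !=set0.
  exists (delta_mx 0 (Ordinal n0)); rewrite /S /= bf1.
  rewrite (bigD1 (Ordinal n0)) //= big1 ?addr0; first by rewrite !mxE eqxx mulr1.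
  by move=> i /negbTE hi; rewrite !mxE hi mulr0.
have cS : compact S.
  apply: bounded_closed_compact.
    exists 1; split => // x x1 v Sv.
    rewrite /Num.Def.normr/= mx_normrE (bigmax_le _ (ltW (lt_trans ltr01 x1)))//= => -[i j] _ /=.
    apply: (le_trans _ (ltW x1)); rewrite (ord1 i).
    have : v 0 j ^+ 2 <= 1.
      rewrite -Sv bf1 (bigD1 j) //= -expr2 lerDl sumr_ge0 // => k _.
      by rewrite -expr2 sqr_ge0.
    rewrite -real_normK ?num_real // => h; have := normr_ge0 (v 0 j); nra.
  have -> : S = (fun v => bf 1%:M v v) @^-1` [set x | x = 1] by [].
  apply: preimage_closed; last exact: closed_eq.
  by move=> x _; apply: cont_bf.
have [c Sc cmax] := EVT_max_rV S0 cS (continuous_subspaceT (@cont_bf A)).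
have hle u : bf A u u <= bf A c c * bf 1%:M u u.
  have [->|u0] := eqVneq u 0; first by rewrite /bf !mul0mx mxE mulr0.
  have gt0 : 0 < bf 1%:M u u by rewrite lt_neqAle bf1_ge0 andbT eq_sym bf1_eq0.
  pose k := (Num.sqrt (bf 1%:M u u))^-1.
  have k0 : 0 < k by rewrite invr_gt0 sqrtr_gt0.
  have kk : k ^+ 2 * bf 1%:M u u = 1.
    by rewrite /k exprVn sqr_sqrtr ?ltW // mulVf // gt_eqF.
  have Sk : (k *: u) \in S.
    by rewrite inE /S /= bfZl bfZr mulrA -expr2 kk.
  have H := cmax _ Sk; rewrite bfZl bfZr mulrA -expr2 in H.
  by have := ler_wpM2r (ltW gt0) H; rewrite mulrAC kk mul1r.
exists (bf A c c); split => //.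
apply/eigenvalueP; exists c.
  apply: max_eigvec => //; rewrite inE in Sc; by rewrite Sc mulr1.
by rewrite -bf1_eq0; rewrite inE in Sc; rewrite Sc oner_eq0.
Qed.


Lemma bfNA A u w : bf (- A) u w = - bf A u w.
Proof. by rewrite /bf mulmxN mulNmx mxE. Qed.

Lemma bf_delta A i j : bf A (delta_mx 0 i) (delta_mx 0 j) = A i j.
Proof. by rewrite /bf -rowE trmx_delta -colE !mxE. Qed.

Lemma bf1_gt0 u : u != 0 -> 0 < bf 1%:M u u.
Proof. by move=> u0; rewrite lt_neqAle bf1_ge0 andbT eq_sym bf1_eq0. Qed.

Lemma eig_le A M a : eigenvalue A a -> (forall u, bf A u u <= M * bf 1%:M u u) -> a <= M.
Proof.
move=> /eigenvalueP [v hv v0] h; have := h v; rewrite (@bf_eigen A v v a hv).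
by rewrite ler_pM2r // bf1_gt0.
Qed.

Lemma rayleigh_min A : A^T = A -> (0 < n)%N ->
  exists m, eigenvalue A m /\ forall u, m * bf 1%:M u u <= bf A u u.
Proof.
move=> sA n0; have sN : (- A)^T = - A by rewrite linearN /= sA.
have [M [/eigenvalueP [v hv v0] hM]] := @rayleigh_max (- A) sN n0.
exists (- M); split.
  by apply/eigenvalueP; exists v => //; rewrite scaleNr -hv mulmxN opprK.
by move=> u; have := hM u; rewrite bfNA mulNr lerNl.
Qed.

Lemma lmax_eq A M : eigenvalue A M -> (forall u, bf A u u <= M * bf 1%:M u u) ->
  lambda_max A = M.
Proof.
move=> eM h; have ub : ubound [set a : R | eigenvalue A a] M.
  by move=> a /= ea; exact: (@eig_le A M a ea h).
apply/eqP; rewrite eq_le; apply/andP; split.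
  by apply: ge_sup => //; exists M.
by apply: sup_upper_bound => //; split; [exists M | exists M].
Qed.

Lemma lmin_eq A m : eigenvalue A m -> (forall u, m * bf 1%:M u u <= bf A u u) ->
  lambda_min A = m.
Proof.
move=> eM h; have lb : lbound [set a : R | eigenvalue A a] m.
  move=> a /= ea; rewrite -lerN2; apply: (@eig_le (- A) (- m) (- a)).
    by move/eigenvalueP: ea => [v hv v0]; apply/eigenvalueP; exists v => //; rewrite mulmxN hv scaleNr.
  by move=> u; rewrite bfNA mulNr lerN2.
apply/eqP; rewrite eq_le; apply/andP; split; last by apply: lb_le_inf => //; exists m.
by apply: ge_inf => //; exists m.
Qed.

Lemma cauchy_schwarz u w : bf 1%:M u w ^+ 2 <= bf 1%:M u u * bf 1%:M w w.
Proof.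
have [->|w0] := eqVneq w 0; first by rewrite /bf !mul0mx linear0 mulmx0 !mxE expr0n mulr0.
have c0 := @bf1_gt0 w w0.
have := bf1_ge0 (u - (bf 1%:M u w / bf 1%:M w w) *: w).
rewrite -scaleNr bfDl !bfDr !bfZl !bfZr (@bf_sym 1%:M w u) ?trmx1 //.
set a := bf 1%:M u u; set b := bf 1%:M u w; set c := bf 1%:M w w => h.
have e : a + - (b / c) * b + (- (b / c) * b + - (b / c) * (- (b / c) * c)) = a - b ^+ 2 / c.
  by field; rewrite gt_eqF.
by rewrite e subr_ge0 ler_pdivrMr // in h.
Qed.

Lemma bfDA A1 A2 u w : bf (A1 + A2) u w = bf A1 u w + bf A2 u w.
Proof. by rewrite /bf mulmxDr mulmxDl mxE. Qed.
Lemma bfZA c A u w : bf (c *: A) u w = c * bf A u w.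
Proof. by rewrite /bf -scalemxAr -scalemxAl mxE. Qed.
Lemma bf_outer u0 v : bf (u0^T *m u0) v v = bf 1%:M v u0 ^+ 2.
Proof.
rewrite /bf mulmx1 !mulmxA -(mulmxA (v *m u0^T)) mxE big_ord1 expr2.
congr (_ * _).
transitivity (((u0 *m v^T)^T) 0 0); first by rewrite [in RHS]mxE.
by rewrite trmx_mul trmxK.
Qed.

End Bil.
Lemma final_alg (R : realFieldType) (a b L m r t be s1 s2 X2 Y2 qw : R) :
  0 < a -> 0 < L -> 0 < m -> 0 <= r -> L * b = m * a * r ^+ 2 ->
  0 <= X2 -> 0 <= Y2 -> s1 ^+ 2 <= X2 * a -> s2 ^+ 2 <= Y2 * b ->
  - m * Y2 <= qw -> t = a * (1 + r) * (1 - m * r / L) / (L + m) -> 0 <= t ->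
  be = m * a * (1 + r) ^+ 2 / (L + m) ->
  (s1 + s2) ^+ 2 - t * (L * X2 + qw) <= be * (X2 + Y2).
Proof.
move=> a0 L0 m0 r0 hb X0 Y0 h1 h2 hq ht t0 hbe.
have Lm : L + m != 0 by rewrite gt_eqF // addr_gt0.
have L0' : L != 0 by rewrite gt_eqF.
have k1 : be + t * L = a * (1 + r).
  by rewrite hbe ht; field; rewrite Lm L0'.
have k2 : be - t * m = a * m * r * (1 + r) / L by rewrite hbe ht; field; rewrite ?Lm ?L0'.
set K := a * m / L.
have K0 : 0 < K by rewrite /K divr_gt0 // mulr_gt0.
have hbK : b = K * r ^+ 2.
  have -> : b = (L * b) / L by field; rewrite ?Lm ?L0'.
  by rewrite hb /K; field; rewrite ?Lm ?L0'.
have k2' : be - t * m = K * r * (1 + r) by rewrite k2 /K; field; rewrite ?Lm ?L0'.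
have step1 : - t * qw <= t * m * Y2 by nra.
suff : (s1 + s2) ^+ 2 <= (be + t * L) * X2 + (be - t * m) * Y2 by nra.
rewrite k1 k2'.
rewrite hbK in h2.
have [r00|rp] := eqVneq r 0.
  rewrite r00 in h2 *.
  have : s2 = 0.
    by apply/eqP; rewrite -sqrf_eq0 eq_le sqr_ge0 andbT; move: h2; rewrite expr0n /= !mulr0 => h2.
  move=> ->; nra.
have rp' : 0 < r by rewrite lt_neqAle eq_sym rp r0.
have cs : r * (s1 + s2) ^+ 2 <= r * (1 + r) * s1 ^+ 2 + (1 + r) * s2 ^+ 2.
  rewrite -subr_ge0.
  have -> : r * (1 + r) * s1 ^+ 2 + (1 + r) * s2 ^+ 2 - r * (s1 + s2) ^+ 2 = (r * s1 - s2) ^+ 2 by ring.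
  exact: sqr_ge0.
have : r * (s1 + s2) ^+ 2 <= r * (a * (1 + r) * X2 + K * r * (1 + r) * Y2) by nra.
by rewrite ler_pM2l.
Qed.

Local Close Scope classical_set_scope.

Theorem corollary2 (R : realType) (n : nat) (e : rel 'I_n) (P : 'M[R]_n) :
  simple_graph e -> has_edge e ->
  let A := adjmx R e in
  let l1 := lambda_max A in
  let ln := lambda_min A in
  orth_proj_onto P (eigenspace A l1) ->
  let p := ip (ones R n) (P *m ones R n) in
  (- ln * (n%:R - p)) / (l1 * p) <= 1 ->
  lovasz_theta R e <=
    (- n%:R * ln) / (l1 - ln) * (p / n%:R)
      * (1 + Num.sqrt ((l1 * (n%:R - p)) / (- ln * p))) ^+ 2.
Proof.
move=> [irr sym] [i0 [j0 eij]] A l1 ln [PT [PP PE]] p hc.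
have n0 : (0 < n)%N by apply: leq_ltn_trans (leq0n _) (ltn_ord i0).
have sA : A^T = A by apply/matrixP => i j; rewrite !mxE sym.
have A_ii i : A i i = 0 by rewrite !mxE (negbTE (irr i)).
have A_ge0 i j : 0 <= A i j by rewrite mxE ler0n.
have ij : i0 != j0.
  by apply/eqP => h; move: eij; rewrite h (negbTE (irr j0)).
have [L [eL hL]] := rayleigh_max A sA n0.
have [mu [emu hmu]] := rayleigh_min A sA n0.
have l1E : l1 = L := lmax_eq A L eL hL.
have lnE : ln = mu := lmin_eq A mu emu hmu.
have Aij : A i0 j0 = 1 by rewrite mxE eij.
have Aji : A j0 i0 = 1 by rewrite mxE sym eij.
have d1 i j : bf 1%:M (delta_mx 0 i : 'rV[R]_n) (delta_mx 0 j) = (i == j)%:R.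
  by rewrite bf_delta mxE.
have L1 : 1 <= L.
  have := hL (delta_mx 0 i0 + delta_mx 0 j0).
  rewrite !bfDl !bfDr !d1 !bf_delta Aij Aji !A_ii eqxx (negbTE ij) eq_sym (negbTE ij).
  move=> h; rewrite eqxx /= in h; lra.
have mu1 : mu <= -1.
  have := hmu (delta_mx 0 i0 - delta_mx 0 j0).
  rewrite !bfDl !bfDr !bfNl !bfNr !d1 !bf_delta Aij Aji !A_ii eqxx (negbTE ij) eq_sym (negbTE ij).
  move=> h; rewrite eqxx /= in h; lra.
rewrite l1E in PE.
move: PE => /andP [sPE sEP].
have PxE (v : 'rV[R]_n) : (v *m P) *m A = L *: (v *m P).
  by apply/eigenspaceP; apply: submx_trans sPE; apply: submxMl.
have Peig (u : 'rV[R]_n) : u *m A = L *: u -> u *m P = u.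
  move=> hu; have : (u <= P)%MS by apply: submx_trans sEP; apply/eigenspaceP.
  by move/submxP => [k ->]; rewrite -mulmxA PP.
have bfP (u w : 'rV[R]_n) : bf 1%:M (u *m P) w = bf P u w by rewrite /bf mulmx1.
have bfPP (u w : 'rV[R]_n) : bf 1%:M (u *m P) (w *m P) = bf P u w.
  by rewrite /bf mulmx1 trmx_mul PT mulmxA -(mulmxA u) PP.
have sP : P^T = P := PT.
pose o : 'rV[R]_n := const_mx 1.
have pE : p = bf P o o.
  by rewrite /p /ip /ones /bf trmx_const mulmxA trmx_const.
have oo : bf 1%:M o o = n%:R.
  rewrite bf1; under eq_bigr do rewrite !mxE mulr1.
  by rewrite sumr_const card_ord.
pose oP := o *m P.
pose o' := o - oP.
have pE2 : p = bf 1%:M oP oP by rewrite pE bfPP.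
have b0 : bf 1%:M o' o' = n%:R - p.
  rewrite /o' bfDl !bfDr !bfNl !bfNr opprK oo -pE2 (@bf_sym _ _ 1%:M o oP) ?trmx1 //.
  rewrite /oP bfP -pE; ring.
(* Perron *)
have p0 : 0 < p.
  move/eigenvalueP: eL => [u hu u0].
  pose au := map_mx (fun x : R => `|x|) u.
  have e1 : bf 1%:M au au = bf 1%:M u u.
    rewrite !bf1; apply: eq_bigr => i _.
    by rewrite mxE -normrM ger0_norm // -expr2 sqr_ge0.
  have e2 : bf A u u <= bf A au au.
    rewrite !bfE; apply: ler_sum => i _; apply: ler_sum => j _.
    apply: le_trans (ler_norm _) _.
    by rewrite !normrM (ger0_norm (A_ge0 i j)) !mxE.
  have e3 : bf A au au = L * bf 1%:M au au.
    apply/eqP; rewrite eq_le hL /= e1 -(bf_eigen A u u L hu) //.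
  have hau := Peig _ (max_eigvec A L au sA hL e3).
  have s0 : 0 < bf 1%:M au o.
    rewrite lt_neqAle; apply/andP; split; last first.
      by rewrite bf1 sumr_ge0 // => i _; rewrite !mxE mulr1 normr_ge0.
    rewrite eq_sym bf1 psumr_eq0; last by move=> k _; rewrite !mxE mulr1 normr_ge0.
    apply/negP => /allP h; move/negP: u0; apply; apply/eqP/rowP => i.
    move: (h i (mem_index_enum _)); rewrite !mxE mulr1 normr_eq0 => /eqP ->.
    by [].
  have e4 : bf 1%:M au o = bf 1%:M au oP.
    by rewrite -{1}hau bfP -bfPP hau.
  have := cauchy_schwarz au oP; rewrite -e4 -pE2 => h.
  rewrite lt_neqAle {2}pE2 bf1_ge0 andbT; apply/negP => /eqP h0.
  move: h; rewrite -h0 mulr0 => h; have : bf 1%:M au o ^+ 2 > 0 by rewrite exprn_gt0.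
  by rewrite ltNge h.
rewrite l1E lnE in hc *.
have Lp0 : 0 < L * p by rewrite mulr_gt0 // (lt_le_trans ltr01 L1).
rewrite ler_pdivrMr // mul1r in hc.
have L0 : 0 < L by apply: lt_le_trans ltr01 L1.
have m0 : 0 < - mu by rewrite oppr_gt0; apply: le_lt_trans mu1 _; rewrite oppr_lt0.
have bnn : 0 <= n%:R - p by rewrite -b0 bf1_ge0.
pose r := Num.sqrt (L * (n%:R - p) / (- mu * p)).
have r0 : 0 <= r by apply: sqrtr_ge0.
have r2 : L * (n%:R - p) = - mu * p * r ^+ 2.
  rewrite /r sqr_sqrtr; last by apply: divr_ge0; apply: mulr_ge0 => //; apply: ltW.
  by field; rewrite (gt_eqF p0) /= -oppr_eq0 gt_eqF.
have mrL : - mu * r <= L.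
  have h1 : p * (- mu * r) ^+ 2 <= p * L ^+ 2.
    have -> : p * (- mu * r) ^+ 2 = - mu * (- mu * p * r ^+ 2) by ring.
    rewrite -r2; nra.
  rewrite ler_pM2l // in h1.
  have hmr : 0 <= - mu * r by rewrite mulr_ge0 // ltW.
  nra.
pose t := p * (1 + r) * (1 - - mu * r / L) / (L + - mu).
have t0 : 0 <= t.
  rewrite /t; apply: divr_ge0; last by rewrite ltW // addr_gt0.
  apply: mulr_ge0; first by apply: mulr_ge0; [apply: ltW | apply: addr_ge0].
  by rewrite subr_ge0 ler_pdivrMr // mul1r.
pose be := - mu * p * (1 + r) ^+ 2 / (L + - mu).
have -> : - n%:R * mu / (L - mu) * (p / n%:R) * (1 + r) ^+ 2 = be.
  rewrite /be; field.
  rewrite gt_eqF ?addr_gt0 //=.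
  by rewrite pnatr_eq0 -lt0n n0.
pose B : 'M[R]_n := const_mx 1 - t *: A.
have symB : B^T = B by rewrite /B linearB linearZ /= trmx_const sA.
have fB : theta_feasible e B.
  split => // i j h; rewrite /B !mxE.
  move: h => /orP [/eqP ->|/negbTE ->]; last by rewrite mulr0 subr0.
  by rewrite (negbTE (irr j)) mulr0 subr0.
have Jo : (const_mx 1 : 'M[R]_n) = o^T *m o.
  by apply/matrixP => i j; rewrite !mxE big_ord1 !mxE mulr1.
have core (v : 'rV[R]_n) : bf B v v <= be * bf 1%:M v v.
  pose x := v *m P; pose w := v - x.
  have hx : x = v *m P by [].
  have hw : w = v - x by [].
  clearbody w x.
  have hv : v = x + w by rewrite hw addrC subrK.
  have wP : w *m P = 0 by rewrite hw hx mulmxBl -mulmxA PP subrr.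
  have xw : bf 1%:M x w = 0 by rewrite hw hx bfDr bfNr bfPP bfP subrr.
  have xA : x *m A = L *: x by rewrite hx PxE.
  have E1 : bf 1%:M v v = bf 1%:M x x + bf 1%:M w w.
    rewrite {1 2}hv bfDl !bfDr xw (@bf_sym _ _ 1%:M w x) ?trmx1 // xw; ring.
  have E2 : bf A v v = L * bf 1%:M x x + bf A w w.
    rewrite {1 2}hv bfDl !bfDr (bf_sym A w x sA).
    rewrite (bf_eigen A x x L xA) (bf_eigen A x w L xA) xw; ring.
  have E3 : bf 1%:M v o = bf 1%:M x o + bf 1%:M w o by rewrite {1}hv bfDl.
  have I1 : bf 1%:M x o ^+ 2 <= bf 1%:M x x * p.
    have -> : bf 1%:M x o = bf 1%:M x oP by rewrite hx bfP bfPP.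
    by rewrite pE2; apply: cauchy_schwarz.
  have wo : bf 1%:M w oP = 0.
    rewrite (@bf_sym _ _ 1%:M w oP) ?trmx1 // /oP bfP (bf_sym P o w sP) -bfP wP.
    by rewrite /bf !mul0mx mxE.
  have I2 : bf 1%:M w o ^+ 2 <= bf 1%:M w w * (n%:R - p).
    have -> : bf 1%:M w o = bf 1%:M w o' by rewrite /o' bfDr bfNr wo subr0.
    by rewrite -b0; apply: cauchy_schwarz.
  have I3 : - - mu * bf 1%:M w w <= bf A w w by rewrite opprK; apply: hmu.
  have -> : bf B v v = (bf 1%:M x o + bf 1%:M w o) ^+ 2 - t * (L * bf 1%:M x x + bf A w w).
    by rewrite /B bfDA bfNA bfZA Jo bf_outer E3 E2.
  rewrite E1; apply: (@final_alg _ p (n%:R - p) L (- mu) r t be _ _ _ _ _ p0 L0 m0 r0 r2) => //; exact: bf1_ge0.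
have [MB [eMB hMB]] := rayleigh_max B symB n0.
have lB : lambda_max B = MB := lmax_eq B MB eMB hMB.
have MBbe : MB <= be := eig_le B be MB eMB core.
rewrite /lovasz_theta.
set T := [set lambda_max B0 | B0 in _]%classic.
have lbT : lbound T 1.
  move=> y [B' [symB' hB'] <-].
  have [M' [eM' hM']] := rayleigh_max B' symB' n0.
  rewrite (lmax_eq B' M' eM' hM').
  by have := hM' (delta_mx 0 i0); rewrite d1 bf_delta eqxx (hB' i0 i0) ?eqxx // mulr1.
have := @ge_inf R T (ex_intro _ 1 lbT) (lambda_max B).
move=> h; apply: le_trans (h _) _; first by exists B.
by rewrite lB.
Qed.
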